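(* If $G \ne K_4$ is a connected, claw-free, cubic graph of order $n$, then (a) $\frac{1}{3}n \le \alpha(G) \le \frac{2}{5}n$, and (b) $\frac{3}{5}n \le m(G,3) \le \frac{2}{3}n$.
   Context: A graph is claw-free if it has no induced subgraph isomorphic to $K_{1,3}$; it is cubic if every vertex has degree $3$. $\alpha(G)$ is the independence number. $3$-percolation: starting from a set $S$ of infected vertices, repeatedly infect any uninfected vertex having at least $3$ infected neighbors; $S$ is $3$-percolating if eventually all vertices are infected, and $m(G,3)$ is the minimum cardinality of a $3$-percolating set of $G$. *)

(* Defs.v *)
From mathcomp Require Import all_boot all_order.
Set Implicit Arguments. Unset Strict Implicit. Unset Printing Implicit Defensive.

Definition simple_graph (T : finType) (e : rel T) : Prop :=
  symmetric e /\ irreflexive e.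

Definition nbhd (T : finType) (e : rel T) (v : T) : {set T} := [set w | e v w].

Definition cubic (T : finType) (e : rel T) : Prop :=
  forall v : T, #|nbhd e v| = 3.

Definition claw_free (T : finType) (e : rel T) : Prop :=
  ~ exists v a b c : T,
      [/\ e v a, e v b, e v c & [/\ a != b, a != c & b != c]] /\
      [/\ ~~ e a b, ~~ e a c & ~~ e b c].

Definition connected (T : finType) (e : rel T) : Prop :=
  forall x y : T, connect e x y.

Definition is_K4 (T : finType) (e : rel T) : Prop :=
  #|T| = 4 /\ forall x y : T, x != y -> e x y.

Definition independent (T : finType) (e : rel T) (S : {set T}) : bool :=
  [forall x in S, forall y in S, ~~ e x y].

Definition alpha (T : finType) (e : rel T) : nat :=
  \max_(S : {set T} | independent e S) #|S|.

Definition perc_step (T : finType) (e : rel T) (r : nat) (S : {set T}) : {set T} :=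
  S :|: [set v | r <= #|[set w in S | e v w]|].

(* the set of eventually infected vertices: the process is monotone, so it
   stabilises after at most #|T| rounds *)
Definition perc_closure (T : finType) (e : rel T) (r : nat) (S : {set T}) : {set T} :=
  iter #|T| (perc_step e r) S.

Definition percolating (T : finType) (e : rel T) (r : nat) (S : {set T}) : bool :=
  perc_closure e r S == [set: T].

Definition m_perc (T : finType) (e : rel T) (r : nat) : nat :=
  \big[minn/#|T|]_(S : {set T} | percolating e r S) #|S|.

(* Main.v *)
Require Import Defs.
From mathcomp Require Import all_boot all_order.
From mathcomp Require Import zify.
Set Implicit Arguments. Unset Strict Implicit.

Lemma sum_bool_card (T : finType) (A : {set T}) (P : pred T) :
  \sum_(i in A) (P i : nat) = #|[set i in A | P i]|.
Proof.
rewrite -sum1_card big_mkcond [RHS]big_mkcond /=; apply: eq_bigr => i _.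
by rewrite inE; case: (i \in A); case: (P i).
Qed.

Lemma indepU (T : finType) (e : rel T) (A B : {set T}) :
  symmetric e -> independent e A -> independent e B ->
  (forall a b, a \in A -> b \in B -> ~~ e a b) -> independent e (A :|: B).
Proof.
move=> sy /forall_inP iA /forall_inP iB hAB; apply/forall_inP => x.
rewrite inE => /orP[xA|xB]; apply/forall_inP => y; rewrite inE => /orP[yA|yB].
- by have /forall_inP := iA x xA; apply.
- exact: hAB.
- by rewrite sy; apply: hAB.
- by have /forall_inP := iB x xB; apply.
Qed.

Lemma indep1 (T : finType) (e : rel T) (w : T) :
  irreflexive e -> independent e [set w].
Proof.
move=> ir; apply/forall_inP => x; rewrite inE => /eqP->; apply/forall_inP => y.
by rewrite inE => /eqP->; rewrite ir.
Qed.

Lemma indep0 (T : finType) (e : rel T) : independent e set0.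
Proof. by apply/forall_inP => x; rewrite inE. Qed.

Lemma exit_edge (T : finType) (e : rel T) (U : {set T}) u :
  symmetric e -> connected e -> U != setT -> u \in U ->
  exists w z, [/\ w \in U, z \notin U & e w z].
Proof.
move=> sy co UT uU.
have [z zU] : exists z, z \notin U.
  case: (boolP [exists z, z \notin U]) => [/existsP[z hz]|/existsPn h]; first by exists z.
  case/negP: UT; apply/eqP/setP => x; rewrite inE.
  by move: (h x); rewrite negbK.
case: (boolP [exists w in U, exists z in ~: U, e w z]) => [H|h].
  case/exists_inP: H => w wU /exists_inP[z']; rewrite inE => z'U ewz.
  by exists w, z'.
move/exists_inPn: h => h.
have cl : closed e U.
  move=> x y exy; case xU: (x \in U); case yU: (y \in U) => //.
  - by have /exists_inPn/(_ y) := h x xU; rewrite inE yU exy => /(_ isT).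
  - have /exists_inPn/(_ x) := h y yU; rewrite inE xU sy exy => /(_ isT) //.
by move: zU; rewrite -(closed_connect cl (co u z)) uU.
Qed.

Lemma greedy (T : finType) (e : rel T) :
  simple_graph e -> connected e -> cubic e ->
  forall U : {set T}, U != setT ->
  exists S : {set T}, [/\ S \subset U, independent e S & #|U| <= 3 * #|S|].
Proof.
move=> [sy ir] co cu U.
elim: {U}#|U|.+1 {-2}U (ltnSn #|U|) => // n IH U ltU UT.
case: (set_0Vmem U) => [->|[u uU]].
  by exists set0; rewrite sub0set indep0 cards0.
have [w [z [wU zU ewz]]] := exit_edge sy co UT uU.
set U' := U :\: (w |: nbhd e w).
have wU' : w \notin U' by rewrite !inE eqxx.
have sU' : U' \subset U by apply: subsetDl.
have ltU' : #|U'| < n.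
  suff : #|U'| < #|U| by move: ltU; clear; lia.
  apply: proper_card; apply/properP; split => //.
  by exists w.
have U'T : U' != setT by apply: contraNneq wU' => ->; rewrite inE.
have [S' [sS' iS' cS']] := IH U' ltU' U'T.
exists (w |: S'); split.
- by rewrite subUset sub1set wU (subset_trans sS' sU').
- apply: indepU => //; first exact: indep1.
  move=> a b; rewrite inE => /eqP-> bS'.
  have : b \in U' by apply: (subsetP sS').
  rewrite !inE negb_or => /andP[/andP[_]] //.
- have wS' : w \notin S' by apply: contra wU'; apply: (subsetP sS').
  rewrite cardsU1 wS' /=.
  have h1 : U \subset U' :|: (w |: (nbhd e w :\ z)).
    apply/subsetP => x xU; rewrite !inE xU /=.
    case: (x == w) => //=; case exw: (e w x) => //=; rewrite ?orbT //.
    by rewrite andbT; apply: contraNneq zU => <-.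
  have h2 : #|nbhd e w :\ z| = 2.
    have := cardsD1 z (nbhd e w); rewrite cu inE ewz /= => h; clear -h; lia.
  have := subset_leq_card h1; rewrite cardsU.
  have := cardsU1 w (nbhd e w :\ z); rewrite h2.
  move=> a b; clear -a b cS'; lia.
Qed.

Lemma nbS_le2 (T : finType) (e : rel T) (S : {set T}) y :
  claw_free e -> independent e S -> #|nbhd e y :&: S| <= 2.
Proof.
move=> cf /forall_inP iS; rewrite leqNgt; apply/negP.
case/card_gt2P => a [b [c [[aN bN cN] [ab bc ca]]]].
move: aN bN cN; rewrite !inE => /andP[ya aS] /andP[yb bS] /andP[yc cS].
apply: cf; exists y, a, b, c; split; first by split => //; split => //; rewrite eq_sym.
have nS x z : x \in S -> z \in S -> ~~ e x z.
  by move=> xS zS; have /forall_inP := iS x xS; apply.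
by split; apply: nS.
Qed.

Lemma upper (T : finType) (e : rel T) (S : {set T}) :
  simple_graph e -> claw_free e -> cubic e -> independent e S ->
  5 * #|S| <= 2 * #|T|.
Proof.
move=> [sy ir] cf cu iS.
have h1 : 3 * #|S| = \sum_(x in S) \sum_(y in ~: S) (e x y : nat).
  rewrite -sum1_card big_distrr /=; apply: eq_bigr => x xS.
  rewrite sum_bool_card muln1 -(cu x); apply: eq_card => y; rewrite !inE.
  case exy: (e x y); rewrite ?andbT ?andbF //.
  apply/esym/negP => yS; move/forall_inP: iS => /(_ x xS)/forall_inP/(_ y yS).
  by rewrite exy.
rewrite exchange_big /= in h1.
have h2 : \sum_(y in ~: S) \sum_(x in S) (e x y : nat) <= \sum_(y in ~: S) 2.
  apply: leq_sum => y _; rewrite sum_bool_card.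
  apply: leq_trans (nbS_le2 y cf iS); apply: subset_leq_card.
  by apply/subsetP => x; rewrite !inE sy => /andP[-> ->].
rewrite -h1 sum_nat_const in h2.
have := cardsC S; lia.
Qed.

Lemma neq_of_e (T : finType) (e : rel T) x y : irreflexive e -> e x y -> x != y.
Proof. by move=> ir; apply: contraTneq => ->; rewrite ir. Qed.

Lemma card3 (T : finType) (p q r : T) :
  p != q -> p != r -> q != r -> #|[set p; q; r]| = 3.
Proof.
move=> pq pr qr; rewrite setUC cardsU1 cards2 pq !inE negb_or.
by rewrite !(eq_sym r) pr qr.
Qed.

Lemma nb3 (T : finType) (e : rel T) v p q r s :
  cubic e -> e v p -> e v q -> e v r -> p != q -> p != r -> q != r ->
  e v s -> s \in [set p; q; r].
Proof.
move=> cu vp vq vr pq pr qr vs.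
have sub : [set p; q; r] \subset nbhd e v.
  by apply/subsetP => z; rewrite !inE => /orP[/orP[]|]/eqP->.
have : [set p; q; r] == nbhd e v by rewrite eqEcard sub cu card3.
by move/eqP->; rewrite inE.
Qed.

Lemma no_K4 (T : finType) (e : rel T) :
  simple_graph e -> connected e -> cubic e -> ~ is_K4 e ->
  forall a b c d, e a b -> e a c -> e a d -> e b c -> e b d -> e c d -> False.
Proof.
move=> [sy ir] co cu nK a b c d ab ac ad bc bd cd.
have nab := neq_of_e ir ab. have nac := neq_of_e ir ac. have nad := neq_of_e ir ad.
have nbc := neq_of_e ir bc. have nbd := neq_of_e ir bd. have ncd := neq_of_e ir cd.
have ba : e b a by rewrite sy. have ca : e c a by rewrite sy.
have da : e d a by rewrite sy. have cb : e c b by rewrite sy.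
have db : e d b by rewrite sy. have dc : e d c by rewrite sy.
set W := [set a; b; c; d].
have cl1 : forall x y, x \in W -> e x y -> y \in W.
  move=> x y; rewrite !inE => /orP[/orP[/orP[]|]|]/eqP-> xy.
  - by move: (nb3 cu ab ac ad nbc nbd ncd xy); rewrite !inE => /orP[/orP[]|]/eqP->; rewrite eqxx ?orbT.
  - by move: (nb3 cu ba bc bd nac nad ncd xy); rewrite !inE => /orP[/orP[]|]/eqP->; rewrite eqxx ?orbT.
  - by move: (nb3 cu ca cb cd nab nad nbd xy); rewrite !inE => /orP[/orP[]|]/eqP->; rewrite eqxx ?orbT.
  - by move: (nb3 cu da db dc nab nac nbc xy); rewrite !inE => /orP[/orP[]|]/eqP->; rewrite eqxx ?orbT.
have cl : closed e W.
  move=> x y xy; apply/idP/idP => [xW|yW]; first exact: cl1 xy.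
  by apply: cl1 yW _; rewrite sy.
have aW : a \in W by rewrite !inE eqxx.
have Wall : forall z, z \in W by move=> z; rewrite -(closed_connect cl (co a z)).
apply: nK; split.
  have -> : #|T| = #|W| by rewrite -cardsT; apply: eq_card => z; rewrite Wall inE.
  rewrite /W setUC cardsU1 card3 // !inE !negb_or !(eq_sym d) nad nbd ncd //.
move=> x y; move: (Wall x) (Wall y); rewrite !inE.
move=> /orP[/orP[/orP[]|]|]/eqP-> /orP[/orP[/orP[]|]|]/eqP-> //; by rewrite eqxx.
Qed.

Definition is_tri (T : finType) (e : rel T) (B : {set T}) : bool :=
  [exists a, exists b, exists c, [&& B == [set a; b; c], e a b, e a c & e b c]].

Lemma tri_card (T : finType) (e : rel T) B : irreflexive e -> is_tri e B -> #|B| = 3.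
Proof.
move=> ir /existsP[a /existsP[b /existsP[c /and4P[/eqP-> ab ac bc]]]].
by rewrite card3 // (neq_of_e ir).
Qed.

Lemma tri_at (T : finType) (e : rel T) B v : symmetric e -> is_tri e B -> v \in B ->
  exists p q, [/\ B = [set v; p; q], e v p, e v q & e p q].
Proof.
move=> sy /existsP[a /existsP[b /existsP[c /and4P[/eqP-> ab ac bc]]]].
rewrite !inE => /orP[/orP[]|]/eqP->.
- by exists b, c.
- exists a, c; split => //; last by rewrite sy.
  by apply/setP => z; rewrite !inE; do !case: (_ == _).
- exists a, b; split => //; try by rewrite sy.
  by apply/setP => z; rewrite !inE; do !case: (_ == _).
Qed.

Lemma tri_exists (T : finType) (e : rel T) v : claw_free e -> cubic e ->
  exists p q, [/\ e v p, e v q & e p q].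
Proof.
move=> cf cu.
have : 2 < #|nbhd e v| by rewrite cu.
case/card_gt2P => a [b [c [[aN bN cN] [ab bc ca]]]].
move: aN bN cN; rewrite !inE => va vb vc.
case eab: (e a b); first by exists a, b.
case eac: (e a c); first by exists a, c.
case ebc: (e b c); first by exists b, c.
exfalso; apply: cf; exists v, a, b, c; split; first by split => //; split => //; rewrite eq_sym.
by rewrite eab eac ebc.
Qed.

Lemma in_pq (T : finType) (e : rel T) v p q r s :
  simple_graph e -> cubic e ->
  (forall u w x y, e u w -> e x u -> e x w -> e y u -> e y w -> x != y -> False) ->
  e v p -> e v q -> e p q -> e v r -> e v s -> e r s -> (r == p) || (r == q).
Proof.
move=> [sy ir] cu nd vp vq pq vr vs rs.
case: (boolP ((r == p) || (r == q))) => // /norP[rp rq].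
have pq' := neq_of_e ir pq.
have pr : p != r by rewrite eq_sym.
have qr : q != r by rewrite eq_sym.
have := nb3 cu vp vq vr pq' pr qr vs.
rewrite !inE (eq_sym s r) (negbTE (neq_of_e ir rs)) orbF => /orP[]/eqP sE; subst s.
- have qv : e q v by rewrite sy.
  have qp : e q p by rewrite sy.
  have rv : e r v by rewrite sy.
  exfalso; exact: (nd v p q r vp qv qp rv rs qr).
- have pv : e p v by rewrite sy.
  have rv : e r v by rewrite sy.
  exfalso; exact: (nd v q p r vq pv pq rv rs pr).
Qed.

Lemma tri_unique (T : finType) (e : rel T) v p q r s :
  simple_graph e -> cubic e ->
  (forall u w x y, e u w -> e x u -> e x w -> e y u -> e y w -> x != y -> False) ->
  e v p -> e v q -> e p q -> e v r -> e v s -> e r s -> [set v; p; q] = [set v; r; s].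
Proof.
move=> [sy ir] cu nd vp vq pq vr vs rs.
have sg : simple_graph e by [].
have qp : e q p by rewrite sy.
have sr : e s r by rewrite sy.
have hr := in_pq sg cu nd vp vq pq vr vs rs.
have hs := in_pq sg cu nd vp vq pq vs vr sr.
have hp := in_pq sg cu nd vr vs rs vp vq pq.
have hq := in_pq sg cu nd vr vs rs vq vp qp.
apply/setP => z; rewrite !inE; case: (z == v) => //=.
apply/idP/idP => /orP[]/eqP->.
all: by [].
Qed.

Lemma count_tri (T : finType) (e : rel T) :
  simple_graph e -> claw_free e -> cubic e ->
  (forall u w x y, e u w -> e x u -> e x w -> e y u -> e y w -> x != y -> False) ->
  #|T| = 3 * #|[set B : {set T} | is_tri e B]|.
Proof.
move=> sg cf cu nd; have [sy ir] := sg.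
set Tri := [set B : {set T} | is_tri e B].
have one : forall v, \sum_(B in Tri) (v \in B : nat) = 1.
  move=> v; rewrite sum_bool_card.
  have [p [q [vp vq pq]]] := tri_exists v cf cu.
  suff -> : [set B in Tri | v \in B] = [set [set v; p; q]] by rewrite cards1.
  apply/setP => B; rewrite !inE; apply/idP/idP.
  - case/andP => tB vB; have [r [s [-> vr vs rs]]] := tri_at sy tB vB.
    by rewrite (tri_unique sg cu nd vp vq pq vr vs rs).
  - move/eqP->; rewrite !inE eqxx andbT.
    by apply/existsP; exists v; apply/existsP; exists p; apply/existsP; exists q; rewrite eqxx vp vq pq.
have : \sum_(v in [set: T]) \sum_(B in Tri) (v \in B : nat) = #|T|.
  by rewrite (eq_bigr (fun _ => 1)) // sum1_card cardsT.
rewrite exchange_big /= => <-.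
rewrite (eq_bigr (fun _ => 3)); first by rewrite sum_nat_const mulnC.
move=> B; rewrite inE => tB; rewrite sum_bool_card -(tri_card ir tB).
by apply: eq_card => z; rewrite !inE.
Qed.

Lemma lower (T : finType) (e : rel T) :
  simple_graph e -> connected e -> claw_free e -> cubic e -> ~ is_K4 e ->
  exists S : {set T}, independent e S /\ #|T| <= 3 * #|S|.
Proof.
move=> sg co cf cu nK; have [sy ir] := sg.
case: (boolP [exists u, exists w, exists x, exists y,
   [&& e u w, e x u, e x w, e y u, e y w, x != y & ~~ e x y]]).
- case/existsP => u /existsP[w /existsP[x /existsP[y]]].
  case/and5P => uw xu xw yu /andP[yw /andP[xy nxy]].
  set R := [set x; y] :|: (nbhd e x :|: nbhd e y).
  have xR : x \in R by rewrite !inE eqxx.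
  have RT : ~: R != setT by apply/negP => /eqP/setP/(_ x); rewrite inE xR inE.
  have [S' [sS' iS' cS']] := greedy sg co cu RT.
  exists ([set x; y] :|: S'); split.
    apply: indepU => //.
      apply: indepU => //; try exact: indep1.
      by move=> a b; rewrite !inE => /eqP-> /eqP->.
    move=> a b aS bS; have : b \in ~: R by apply: (subsetP sS').
    rewrite !inE; move: aS; rewrite !inE => /orP[]/eqP->.
      by apply: contra => ->; rewrite !orbT.
    by apply: contra => ->; rewrite !orbT.
  have dis : [disjoint [set x; y] & S'].
    rewrite -setI_eq0; apply/eqP/setP => z; rewrite !inE; apply/negP.
    case/andP => /orP[]/eqP-> /(subsetP sS'); rewrite inE ?xR //.
    by rewrite !inE eqxx orbT.
  rewrite cardsU (_ : [set x; y] :&: S' = set0); last by apply/eqP; rewrite setI_eq0.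
  rewrite cards0 subn0 cards2 xy.
  have cR : #|R| <= 6.
    rewrite cardsU cards2 xy.
    have : #|nbhd e x :|: nbhd e y| <= 4.
      rewrite cardsU !cu.
      have : 2 <= #|nbhd e x :&: nbhd e y|.
        have <- : #|[set u; w]| = 2 by rewrite cards2 (neq_of_e ir uw).
        apply: subset_leq_card; apply/subsetP => z; rewrite !inE.
        by case/orP=> /eqP->; rewrite ?xu ?xw ?yu ?yw.
      move=> a; clear -a; lia.
    move=> a; clear -a; lia.
  have := cardsC R; move=> a; clear -a cR cS'; lia.
- move=> nd'.
  have nd : forall u w x y, e u w -> e x u -> e x w -> e y u -> e y w -> x != y -> False.
    move=> u w x y uw xu xw yu yw xy.
    case exy: (e x y).
      have ux : e u x by rewrite sy. have uy : e u y by rewrite sy.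
      have wx : e w x by rewrite sy. have wy : e w y by rewrite sy.
      exact: (no_K4 sg co cu nK uw ux uy wx wy exy).
    case/negP: nd'; apply/existsP; exists u; apply/existsP; exists w.
    apply/existsP; exists x; apply/existsP; exists y.
    by rewrite uw xu xw yu yw xy exy.
  have cT := count_tri sg cf cu nd.
  case: (set_0Vmem [set: T]) => [T0|[w0 _]].
    exists set0; split; first exact: indep0.
    by rewrite -cardsT T0 cards0.
  have RT : ~: [set w0] != setT by apply/negP => /eqP/setP/(_ w0); rewrite !inE eqxx.
  have [S' [_ iS' cS']] := greedy sg co cu RT.
  exists S'; split => //.
  move: cS'; have := cardsC [set w0]; rewrite cards1.
  move=> a b; clear -a b cT; lia.
Qed.

Lemma step_setT (T : finType) (e : rel T) r : perc_step e r setT = setT.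
Proof. by rewrite /perc_step setTU. Qed.

Lemma iter_setT (T : finType) (e : rel T) r k : iter k (perc_step e r) setT = setT.
Proof. by elim: k => //= k ->; rewrite step_setT. Qed.

Lemma perc_of_indep (T : finType) (e : rel T) (I : {set T}) :
  cubic e -> independent e I -> percolating e 3 (~: I).
Proof.
move=> cu /forall_inP iI.
have st : perc_step e 3 (~: I) = setT.
  apply/setP => v; rewrite !inE; case vI: (v \in I) => //=.
  rewrite -(cu v) leq_eqVlt; apply/orP; left; apply/eqP; apply: eq_card => w.
  rewrite !inE; case: (boolP (e v w)) => [vw|]; rewrite ?andbT ?andbF //.
  by apply/esym/negP => wI; move/forall_inP: (iI v vI) => /(_ w wI); rewrite vw.
rewrite /percolating /perc_closure.
case E: #|T| => [|k].
  apply/eqP/setP => v; have : 0 < #|T| by apply/card_gt0P; exists v.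
  by rewrite E.
by rewrite iterSr st iter_setT.
Qed.

Lemma step_out (T : finType) (e : rel T) (X : {set T}) v u :
  cubic e -> v \notin X -> u \notin X -> e v u -> v \notin perc_step e 3 X.
Proof.
move=> cu vX uX vu; rewrite !inE negb_or vX /= -ltnNge.
have : [set w in X | e v w] \subset nbhd e v :\ u.
  apply/subsetP => w; rewrite !inE => /andP[wX ->]; rewrite andbT.
  by apply: contraNneq uX => <-.
move/subset_leq_card; have := cardsD1 u (nbhd e v); rewrite cu inE vu /=.
lia.
Qed.

Lemma indep_of_perc (T : finType) (e : rel T) (S : {set T}) :
  simple_graph e -> cubic e -> percolating e 3 S -> independent e (~: S).
Proof.
move=> [sy ir] cu pS; apply/forall_inP => x; rewrite inE => xS.
apply/forall_inP => y; rewrite inE => yS; apply/negP => xy.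
have inv : forall k, (x \notin iter k (perc_step e 3) S) && (y \notin iter k (perc_step e 3) S).
  elim => [|k /andP[hx hy]] /=; first by rewrite xS yS.
  rewrite (step_out cu hx hy xy) (step_out cu hy hx) //.
  by rewrite sy.
move: pS (inv #|T|); rewrite /percolating /perc_closure => /eqP->.
by rewrite inE.
Qed.

Lemma bigmin_le_seq (I : eqType) (r : seq I) (P : pred I) (F : I -> nat) d j :
  j \in r -> P j -> \big[minn/d]_(i <- r | P i) F i <= F j.
Proof.
elim: r => // x r IH; rewrite inE big_cons => /orP[/eqP<- ->|jr Pj].
  exact: geq_minl.
case: (P x); last exact: IH jr Pj.
exact: leq_trans (geq_minr _ _) (IH jr Pj).
Qed.

Unset Implicit Arguments.

Theorem theorem3p7 (T : finType) (e : rel T) :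
  simple_graph e -> connected e -> claw_free e -> cubic e -> ~ is_K4 e ->
  (#|T| <= 3 * alpha e /\ 5 * alpha e <= 2 * #|T|) /\
  (3 * #|T| <= 5 * m_perc e 3 /\ 3 * m_perc e 3 <= 2 * #|T|).
Proof.
move=> sg co cf cu nK.
have h1 : #|T| <= 3 * alpha e.
  have [S [iS cS]] := lower sg co cf cu nK.
  apply: leq_trans cS _; rewrite leq_mul2l /=.
  exact: (leq_bigmax_cond (F := fun S : {set T} => #|S|) S iS).
have h2 : 5 * alpha e <= 2 * #|T|.
  rewrite /alpha; elim/big_ind: _ => //.
    by move=> x y hx hy; rewrite /maxn; case: ifP.
  by move=> S iS; exact: (upper sg cf cu iS).
have [I0 I0in Ieq] : {I0 : {set T} | I0 \in independent e & alpha e = #|I0|}.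
  apply: eq_bigmax_cond; apply/card_gt0P; exists set0; exact: indep0.
have h3 : m_perc e 3 <= #|T| - alpha e.
  rewrite /m_perc Ieq -(cardsC I0) addKn.
  apply: bigmin_le_seq; first exact: mem_index_enum.
  exact: perc_of_indep.
have h4 : #|T| <= m_perc e 3 + alpha e.
  rewrite /m_perc; elim/big_ind: _ => //.
  - exact: leq_addr.
  - by move=> x y hx hy; rewrite /minn; case: ifP.
  - move=> S pS; have iS := indep_of_perc sg cu pS.
    have := leq_bigmax_cond (F := fun S : {set T} => #|S|) (~: S) iS.
    rewrite -/(alpha e) => hS.
    have := cardsC S; lia.
lia.
Qed.
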